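(* Assume $0<\rho_{\ell-1,\ell}<1$ for $\ell=1,\dots,L$. For every $k\ge1$ and every $\ell=2,\dots,L+1$, $$q_{k,\ell}=\alpha_{k,\ell}\cdot\prod_{j=1}^{\ell-1}\Lambda_{k,j}\cdot\prod_{m=0}^{k-2}(1+\zeta_{m,\ell}),$$ where $\Lambda_{k,j}=\prod_{m=1}^kL_{m,j}$, $$\alpha_{k,\ell}=\Big(\frac{1-\rho_{\ell-1,\ell}}{1-\rho}\Big)^k\prod_{j=1}^{\ell-2}\rho_{j,j+1}\cdot\sum_{j=0}^{\ell-1}\frac{1-\rho_{j,j+1}}{1-\rho},$$ $$\zeta_{m,\ell}=\frac{1}{(1-\rho_{\ell-1,\ell})\prod_{j=1}^{\ell-1}L_{m+1,j}}\cdot\frac{\sum_{j=1}^{\ell-1}q_{m,j}\,w_j^\ell\,C_{m+1,j,\ell}}{\sum_{j=1}^{\ell}q_{m,j}\,w_j^\ell},$$ $$B_{m,n,\ell}=\sum_{p=n-1}^{\ell-1}(1-\rho_{p,p+1})\prod_{j=1}^pL_{m,j},\qquad C_{m,n,\ell}=B_{m,n,\ell}-(1-\rho_{\ell-1,\ell})\prod_{j=1}^{\ell-1}L_{m,j}\quad(1\le n\le\ell),$$ and an empty product equals $1$.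
   Context: Model. Fix an integer $L\ge1$, $\rho\in(0,1)$ and $\rho_{\ell-1,\ell}$ ($\ell=2,\dots,L$); put $\rho_{0,1}=\rho$ and $\rho_{L,L+1}=0$. Change-points: $P(\Gamma_1=m)=\rho(1-\rho)^m$, $m\ge0$; $\Gamma_\ell=\Gamma_{\ell-1}+G_\ell$ with independent $G_\ell$, $P(G_\ell=m)=\rho_{\ell-1,\ell}(1-\rho_{\ell-1,\ell})^m$. Observations $Z_{k,\ell}$ are conditionally independent given the change-points with density $f_0$ if $k<\Gamma_\ell$ and $f_1$ if $k\ge\Gamma_\ell$, where $f_0,f_1$ are mutually absolutely continuous. $L_{k,j}=f_1(Z_{k,j})/f_0(Z_{k,j})$. $q_{k,\ell}=p_{k,\ell}/(\rho p_{k,1})$, $\ell=1,\dots,L+1$, where $p_{k,\ell}=P(\Gamma_1\le k,\dots,\Gamma_{\ell-1}\le k,\Gamma_\ell>k,\dots,\Gamma_L>k\mid\mathbf Z_1,\dots,\mathbf Z_k)$. Weights $w_m^\ell=\prod_{j=m-1}^{\ell-2}\rho_{j,j+1}$ ($1\le m\le\ell$; equal to $1$ if $m=\ell$). These satisfy $q_{k,1}=1/\rho$, $q_{0,\ell}=\frac{(1-\rho_{\ell-1,\ell})\prod_{j=0}^{\ell-2}\rho_{j,j+1}}{\rho(1-\rho)}$ for $\ell\ge2$, and for $k\ge1$: $q_{k,\ell}=\frac{1-\rho_{\ell-1,\ell}}{1-\rho}\prod_{j=1}^{\ell-1}L_{k,j}\sum_{j=1}^{\ell}q_{k-1,j}w_j^\ell$.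 *)

(* Defs.v *)
From HB Require Import structures.
From mathcomp Require Import all_boot all_order all_algebra.
Set Implicit Arguments. Unset Strict Implicit. Unset Printing Implicit Defensive.
Import Order.TTheory GRing.Theory Num.Theory.
Local Open Scope ring_scope.

(* Conventions:
   rho p      stands for rho_{p,p+1}   (so rho 0 = rho, rho L = 0)
   Lr k j     stands for L_{k,j}       (k >= 1, 1 <= j <= L)
   q k l      stands for q_{k,l}       (k >= 0, 1 <= l <= L+1)            *)

Definition lr (R : realFieldType) (X : Type) (f0 f1 : X -> R)
  (Z : nat -> nat -> X) (k j : nat) : R := f1 (Z k j) / f0 (Z k j).

Definition wgt (R : realFieldType) (rho : nat -> R) (m l : nat) : R :=
  \prod_(m.-1 <= j < l.-1) rho j.

Definition Lambda (R : realFieldType) (Lr : nat -> nat -> R) (k j : nat) : R :=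
  \prod_(1 <= m < k.+1) Lr m j.

Definition alpha (R : realFieldType) (rho : nat -> R) (k l : nat) : R :=
  ((1 - rho l.-1) / (1 - rho 0%N)) ^+ k
  * (\prod_(1 <= j < l.-1) rho j)
  * \sum_(0 <= j < l) (1 - rho j) / (1 - rho 0%N).

Definition Bc (R : realFieldType) (rho : nat -> R) (Lr : nat -> nat -> R)
  (m n l : nat) : R :=
  \sum_(n.-1 <= p < l) (1 - rho p) * \prod_(1 <= j < p.+1) Lr m j.

Definition Cc (R : realFieldType) (rho : nat -> R) (Lr : nat -> nat -> R)
  (m n l : nat) : R :=
  Bc rho Lr m n l - (1 - rho l.-1) * \prod_(1 <= j < l) Lr m j.

Definition zeta (R : realFieldType) (rho : nat -> R) (Lr : nat -> nat -> R)
  (q : nat -> nat -> R) (m l : nat) : R :=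
  1 / ((1 - rho l.-1) * \prod_(1 <= j < l) Lr m.+1 j)
  * ((\sum_(1 <= j < l) q m j * wgt rho j l * Cc rho Lr m.+1 j l)
     / (\sum_(1 <= j < l.+1) q m j * wgt rho j l)).

(* Main.v *)
Require Import Defs.
From HB Require Import structures.
From mathcomp Require Import all_boot all_order all_algebra.
Import Order.TTheory GRing.Theory Num.Theory.
Local Open Scope ring_scope.

Lemma abel_tri (R : comNzRingType) (G a : nat -> R) (N : nat) :
  \sum_(1 <= n < N.+1) G n.-1 * \sum_(1 <= j < n.+1) a j
  = \sum_(1 <= j < N.+1) a j * \sum_(j.-1 <= p < N) G p.
Proof.
elim: N => [|N IH]; first by rewrite !big_geq.
rewrite big_nat_recr //= IH.
rewrite (@eq_big_nat _ _ _ 1 N.+2 (fun j => a j * \sum_(j.-1 <= p < N.+1) G p)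
   (fun j => a j * \sum_(j.-1 <= p < N) G p + a j * G N)); last first.
  move=> j /andP[h1 h2]; rewrite big_nat_recr ?mulrDr //.
  by case: j h1 h2 => //= j _; rewrite ltnS.
rewrite big_split /= [in RHS]big_nat_recr //=.
rewrite [X in _ = _ + _ * X + _]big_geq // mulr0 addr0 -big_distrl /= mulrC.
by [].
Qed.

Lemma field_step (F : fieldType) (u v P S T S' : F) :
  u != 0 -> v != 0 -> P != 0 -> S != 0 -> v * S' = u * P * S + T ->
  u / v * P * S * (1 + 1 / (u * P) * (T / S)) = S'.
Proof.
move=> hu hv hP hS hE.
have -> : S' = (u * P * S + T) / v by rewrite -hE mulrAC divff // mul1r.
rewrite mulrDr mulr1 mulrDl; congr (_ + _); first by rewrite -!mulrA; congr (_ * _); rewrite mulrC mulrA.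
rewrite mul1r.
have -> : u / v * P * S = (u * P) * (S / v) by rewrite -!mulrA; congr (_ * _); rewrite mulrC mulrA.
rewrite mulrACA divff ?mulf_neq0 // mul1r.
by rewrite [S / v]mulrC -mulrA [S * _]mulrCA divff // mulr1 mulrC.
Qed.

Lemma field2 (F : fieldType) (x A B r0 Pi v : F) :
  r0 != 0 -> A * B = r0 * Pi -> x * A / (r0 * v) * B = Pi * (x / v).
Proof.
move=> h0 hAB.
rewrite mulrAC -(mulrA x A B) hAB invfM [x * (r0 * Pi)]mulrCA mulrACA divff // mul1r.
by rewrite mulrA [x * Pi]mulrC.
Qed.

Lemma ac4 (R : comNzRingType) (c a p P z e : R) :
  c * a * (p * P) * (z * e) = c * P * (a * p * z * e).
Proof.
rewrite -!mulrA; congr (_ * _).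
by rewrite [RHS]mulrCA; congr (_ * _); rewrite mulrCA.
Qed.

Lemma ring5 (R : comNzRingType) (X Y al uP : R) :
  X + al * uP = uP * (Y + al) + (X - Y * uP).
Proof.
by rewrite mulrDr [uP * Y]mulrC [uP * al]mulrC [RHS]addrC addrA subrK.
Qed.

Lemma sum_nat_gt0 (R : numDomainType) m n (F : nat -> R) :
  (m < n)%N -> (forall i, (m <= i < n)%N -> 0 < F i) -> 0 < \sum_(m <= i < n) F i.
Proof.
move=> hmn H; rewrite big_ltn //; apply: ltr_wpDr; last by apply: H; rewrite leqnn.
rewrite big_nat_cond; apply: sumr_ge0 => i /andP[/andP[h1 h2] _]; apply: ltW; apply: H.
by rewrite h2 andbT (ltnW h1).
Qed.

Lemma prod_nat_gt0 (R : numDomainType) m n (F : nat -> R) :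
  (forall i, (m <= i < n)%N -> 0 < F i) -> 0 < \prod_(m <= i < n) F i.
Proof.
by move=> H; rewrite big_nat_cond; apply: prodr_gt0 => i /andP[hi _]; apply: H.
Qed.

Theorem proposition6 (R : realFieldType) (L : nat) (rho : nat -> R)
  (X : Type) (f0 f1 : X -> R) (Z : nat -> nat -> X) (q : nat -> nat -> R) :
  (1 <= L)%N ->
  (forall p, (p < L)%N -> 0 < rho p < 1) ->
  rho L = 0 ->
  (forall x, 0 < f0 x) -> (forall x, 0 < f1 x) ->
  (forall k, q k 1%N = 1 / rho 0%N) ->
  (forall l, (2 <= l <= L.+1)%N ->
     q 0%N l = (1 - rho l.-1) * (\prod_(0 <= j < l.-1) rho j)
               / (rho 0%N * (1 - rho 0%N))) ->
  (forall k l, (1 <= k)%N -> (1 <= l <= L.+1)%N ->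
     q k l = (1 - rho l.-1) / (1 - rho 0%N)
             * (\prod_(1 <= j < l) lr f0 f1 Z k j)
             * \sum_(1 <= j < l.+1) q k.-1 j * wgt rho j l) ->
  forall k l, (1 <= k)%N -> (2 <= l <= L.+1)%N ->
    q k l = alpha rho k l
            * (\prod_(1 <= j < l) Lambda (lr f0 f1 Z) k j)
            * \prod_(0 <= m < k.-1) (1 + zeta rho (lr f0 f1 Z) q m l).
Proof.
move=> hL hrho hrL hf0 hf1 hq1 hq0 hrec.
have rho_pos p : (p < L)%N -> 0 < rho p by move=> /hrho /andP[].
have onem_pos p : (p <= L)%N -> 0 < 1 - rho p.
  rewrite leq_eqVlt => /orP[/eqP->|hp]; first by rewrite hrL subr0 ltr01.
  by rewrite subr_gt0; case/andP: (hrho p hp).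
have lr_pos k j : 0 < lr f0 f1 Z k j by rewrite /lr divr_gt0.
have predL l : (l <= L.+1)%N -> (l.-1 <= L)%N.
  by case: l.
have wgt_pos j l : (l <= L.+1)%N -> 0 < wgt rho j l.
  move=> hl; rewrite /wgt; apply: prod_nat_gt0 => i /andP[_ hi].
  by apply: rho_pos; apply: leq_trans hi (predL _ hl).
have qpos : forall m j, (1 <= j <= L.+1)%N -> 0 < q m j.
  elim=> [|m IH] j /andP[hj1 hjL].
  - case: j hj1 hjL => [|[|j]] // _ hjL.
      by rewrite hq1 div1r invr_gt0 rho_pos.
    rewrite hq0 //= ?hjL //; apply: divr_gt0; last first.
      by apply: mulr_gt0; [apply: rho_pos | apply: onem_pos].
    apply: mulr_gt0; first by apply: onem_pos; rewrite -ltnS.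
    apply: prod_nat_gt0 => i /andP[_ hi]; apply: rho_pos.
    by apply: leq_trans hi _; rewrite -ltnS.
  - rewrite hrec ?hj1 ?hjL //=; apply: mulr_gt0; first apply: mulr_gt0.
    + by apply: divr_gt0; apply: onem_pos; [apply: predL|].
    + by apply: prod_nat_gt0 => i _.
    + apply: sum_nat_gt0 => // i /andP[hi1 hi2]; apply: mulr_gt0.
        by apply: IH; rewrite hi1 (leq_trans _ hjL).
      by apply: wgt_pos.
move=> k l hk /andP[hl2 hlL].
have hl1 : (1 <= l)%N := ltnW hl2.
have hr0 : rho 0%N != 0 by rewrite gt_eqF // rho_pos.
have hu : 1 - rho l.-1 != 0 by rewrite gt_eqF // onem_pos // predL.
have hv : 1 - rho 0%N != 0 by rewrite gt_eqF // onem_pos.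
pose Lr := lr f0 f1 Z.
pose S m := \sum_(1 <= j < l.+1) q m j * wgt rho j l.
pose P m := \prod_(1 <= j < l) Lr m j.
have wmul j n : (1 <= j <= n)%N -> (n <= l)%N ->
    wgt rho j n * wgt rho n l = wgt rho j l.
  move=> /andP[hj hjn] hnl; rewrite /wgt -big_cat_nat //.
    by rewrite -!subn1 leq_sub2r.
  by rewrite -!subn1 leq_sub2r.
have Ppos m : P m != 0 by rewrite gt_eqF //; apply: prod_nat_gt0.
have Spos m : S m != 0.
  rewrite gt_eqF //; apply: sum_nat_gt0 => // i /andP[hi1 hi2].
  apply: mulr_gt0; last by apply: wgt_pos.
  by apply: qpos; rewrite hi1 (leq_trans _ hlL).
have Ident m : (1 - rho 0%N) * S m.+1 = (1 - rho l.-1) * P m.+1 * S m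
     + \sum_(1 <= j < l) q m j * wgt rho j l * Cc rho Lr m.+1 j l.
  pose G p := (1 - rho p) * \prod_(1 <= i < p.+1) Lr m.+1 i.
  pose a j := q m j * wgt rho j l.
  have E1 : (1 - rho 0%N) * S m.+1
      = \sum_(1 <= n < l.+1) G n.-1 * \sum_(1 <= j < n.+1) a j.
    rewrite /S big_distrr; apply: eq_big_nat => n /andP[hn1 hn2].
    rewrite hrec ?hn1 ?(leq_trans _ hlL) //=.
    have -> : \sum_(1 <= j < n.+1) a j
        = (\sum_(1 <= j < n.+1) q m j * wgt rho j n) * wgt rho n l.
      rewrite big_distrl; apply: eq_big_nat => j /andP[hj1 hj2] /=.
      by rewrite /a -mulrA wmul // hj1.
    rewrite /G prednK // !mulrA [(1 - rho 0%N) * _]mulrC mulfK //.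
  have E2 : (1 - rho 0%N) * S m.+1
      = \sum_(1 <= j < l.+1) (q m j * wgt rho j l) * Bc rho Lr m.+1 j l.
    by rewrite E1 abel_tri.
  rewrite E2 big_nat_recr //=.
  have -> : Bc rho Lr m.+1 l l = (1 - rho l.-1) * P m.+1.
    rewrite /Bc big_ltn; last by rewrite prednK.
    by rewrite (prednK hl1) [X in _ + X]big_geq // addr0.
  rewrite /S big_nat_recr //= /Cc.
  rewrite [X in _ = _ + X](eq_bigr (fun j => q m j * wgt rho j l * Bc rho Lr m.+1 j l
       - (q m j * wgt rho j l) * ((1 - rho l.-1) * P m.+1))); last first.
    by move=> j _; rewrite mulrBr.
  rewrite sumrB -big_distrl /=; exact: ring5.
have Key m : (1 - rho l.-1) / (1 - rho 0%N) * P m.+1 * S m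
     * (1 + zeta rho Lr q m l) = S m.+1.
  by rewrite /zeta; apply: field_step => //; rewrite Ident.
have S0 : S 0%N = \prod_(1 <= j < l.-1) rho j
     * \sum_(0 <= j < l) (1 - rho j) / (1 - rho 0%N).
  have hl0 : (0 < l.-1)%N by case: (l) hl2 => [|[|]].
  have full : \prod_(0 <= t < l.-1) rho t = rho 0%N * \prod_(1 <= t < l.-1) rho t.
    by rewrite big_ltn.
  rewrite /S [LHS]big_add1 /= big_distrr; apply: eq_big_nat => i /andP[_ hi].
  case: i hi => [|j] hi.
    rewrite hq1 /wgt /= full divff // mulr1 mulrA div1r mulVf // mul1r //.
  rewrite hq0 /wgt /=; last by rewrite (leq_trans hi hlL).
  apply: field2 => //; rewrite -full -big_cat_nat //.
  by rewrite -ltnS (ltn_predK hl2).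
have T k' : alpha rho k'.+1 l * (\prod_(1 <= j < l) Lambda Lr k'.+1 j)
    * \prod_(0 <= m < k') (1 + zeta rho Lr q m l)
    = (1 - rho l.-1) / (1 - rho 0%N) * P k'.+1 * S k'.
  elim: k' => [|k' IH].
    rewrite [X in _ * X = _]big_geq // mulr1.
    rewrite (eq_bigr (fun j => Lr 1%N j)); last by move=> j _; rewrite /Lambda big_nat1.
    rewrite /alpha expr1 S0 -!mulrA; congr (_ * (_ * _)).
    by rewrite mulrA mulrC.
  rewrite big_nat_recr //=.
  have -> : \prod_(1 <= j < l) Lambda Lr k'.+2 j
      = (\prod_(1 <= j < l) Lambda Lr k'.+1 j) * P k'.+2.
    by rewrite -big_split; apply: eq_bigr => j _; rewrite /Lambda big_nat_recr.
  have -> : alpha rho k'.+2 l = (1 - rho l.-1) / (1 - rho 0%N) * alpha rho k'.+1 l.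
    by rewrite /alpha exprS !mulrA.
  by rewrite -Key -IH ac4.
case: k hk => // k _.
by rewrite hrec ?hl1 ?hlL //= -T.
Qed.
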